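(* Let $\mathcal{M}=(K,G,A,(\gamma')_{\gamma\in\Gamma},(\delta')_{\delta\in\Delta})$ be a model of $T$ and $\kappa>|\Gamma\Delta|$ an infinite cardinal. Let $K'$ be a real closed subfield of $K$ with $|K'|<\kappa$, $G'$ a pure subgroup of $G$ containing $\Gamma'$ with $G'\subseteq K'(i)$, and $A'$ a pure subgroup of $A$ containing $\Delta'$ with $A'\subseteq K'$, such that $K'(i)$ and $\mathbb{Q}(GA)$ are free over $\mathbb{Q}(G'A')$. Then $G\cap K'(i)=G'$ and $A\cap K'=A'$. Moreover, under these hypotheses, the following are equivalent: (a) for every $k\in(K')^{>0}$ there is $a\in A'$ with $a\le k<a\varepsilon'$; (b) $K'$ is closed under $\lambda$, i.e. $\lambda((K')^{>0})\subseteq K'$.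
   Context: $T$ is the theory of structures $(K,G,A,(\gamma')_{\gamma\in\Gamma},(\delta')_{\delta\in\Delta})$ (for a fixed finite rank $\Gamma\le\mathbb{S}^1$ and $\Delta=\varepsilon^{\mathbb{Z}}$, real $\varepsilon>1$) with $K$ real closed, $A\le K^{>0}$ having $\varepsilon'$ as least element $>1$, $G$ a dense subgroup of $\mathbb{S}^1(K)$, for all $k\in K^{>0}$ some $a\in A$ with $a\le k<a\varepsilon'$, $\gamma\mapsto\gamma'$ and $\delta\mapsto\delta'$ homomorphisms into $G$ and $A$, the orientation axioms, the Mann axioms (every nondegenerate solution in $GA\subseteq K(i)$ of $\sum a_ix_i=1$, $a_i\in\mathbb{Q}^\times$, is the image $(\gamma_1'\delta_1',\dots)$ of a nondegenerate solution in $\Gamma\Delta$), and torsion of $G$ equal to the image of torsion of $\Gamma$. $\Gamma'$, $\Delta'$ denote the images of $\Gamma,\Delta$. $K(i)$ is identified with $K^2$; $A$ is viewed inside $K(i)$. A subgroup $B$ of $A$ is pure if $B\cap A^{[m]}=B^{[m]}$ for all $m\ge1$. For subfields $k\subseteq E,F$ of a common field, $E$ and $F$ are free over $k$ if every subset of $E$ algebraically independent over $k$ is algebraically independent over $F$. $\lambda:K^{>0}\to A$ sends $k$ to the unique $a\in A$ with $a\le k<a\varepsilon'$. *)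

(* Defs.v *)
(* for the model M (K : rcfType, K(i) = K*K with explicit
   operations); Stdlib reals for the fixed parameters Gamma <= S^1 in C = R*R
   and Delta = eps^Z. *)
From Stdlib Require Import Reals List.
From HB Require Import structures.
From mathcomp Require Import all_boot all_order all_algebra.
Set Implicit Arguments. Unset Strict Implicit. Unset Printing Implicit Defensive.
Import Order.TTheory GRing.Theory Num.Theory.
Local Open Scope ring_scope.

Definition Cone : R * R := (R1, R0).
Definition Czero : R * R := (R0, R0).
Definition Cadd (x y : R * R) : R * R := (Rplus x.1 y.1, Rplus x.2 y.2).
Definition Cmul (x y : R * R) : R * R :=
  (Rminus (Rmult x.1 y.1) (Rmult x.2 y.2), Rplus (Rmult x.1 y.2) (Rmult x.2 y.1)).
Definition Cinv (x : R * R) : R * R :=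
  let n := Rplus (Rmult x.1 x.1) (Rmult x.2 x.2) in
  (Rdiv x.1 n, Ropp (Rdiv x.2 n)).
Definition Cexp (x : R * R) (n : nat) : R * R := iter n (Cmul x) Cone.
Definition Cexpz (x : R * R) (z : int) : R * R :=
  match z with Posz n => Cexp x n | Negz n => Cinv (Cexp x n.+1) end.
Definition Con_circle (x : R * R) : Prop :=
  Rplus (Rmult x.1 x.1) (Rmult x.2 x.2) = R1.
Definition Rpowz (e : R) (z : int) : R :=
  match z with Posz n => pow e n | Negz n => Rinv (pow e n.+1) end.
Definition Rint (z : int) : R :=
  match z with Posz n => INR n | Negz n => Ropp (INR n.+1) end.

(* rationals: (num, den) represents num / (den+1) *)
Definition ratq := (int * nat)%type.
Definition ratq_R (q : ratq) : R := Rdiv (Rint q.1) (INR q.2.+1).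

Section KI.
Variable K : rcfType.

Definition cone : K * K := (1, 0).
Definition czero : K * K := (0, 0).
Definition cadd (x y : K * K) : K * K := (x.1 + y.1, x.2 + y.2).
Definition copp (x : K * K) : K * K := (- x.1, - x.2).
Definition cmul (x y : K * K) : K * K :=
  (x.1 * y.1 - x.2 * y.2, x.1 * y.2 + x.2 * y.1).
Definition cinv (x : K * K) : K * K :=
  let n := x.1 ^+ 2 + x.2 ^+ 2 in (x.1 / n, - (x.2 / n)).
Definition cexp (x : K * K) (n : nat) : K * K := iter n (cmul x) cone.
Definition cofK (a : K) : K * K := (a, 0).
Definition on_circle (x : K * K) : Prop := x.1 ^+ 2 + x.2 ^+ 2 = 1.
Definition ratq_K (q : ratq) : K := q.1%:~R / (q.2.+1)%:R.

Definition is_subfieldC (P : K * K -> Prop) : Prop :=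
  [/\ P czero /\ P cone,
      (forall x y, P x -> P y -> P (cadd x y)),
      (forall x, P x -> P (copp x)),
      (forall x y, P x -> P y -> P (cmul x y)) &
      (forall x, P x -> x <> czero -> P (cinv x))].
Definition gen_field (S : K * K -> Prop) (x : K * K) : Prop :=
  forall P, is_subfieldC P -> (forall s, S s -> P s) -> P x.

Definition Ci (K' : K -> Prop) (x : K * K) : Prop := K' x.1 /\ K' x.2.
Definition GAset (G : K * K -> Prop) (A : K -> Prop) (x : K * K) : Prop :=
  exists g a, G g /\ A a /\ x = cmul g (cofK a).

(* A multivariate
   polynomial in n variables over k is encoded as a finite list of
   (coefficient, exponent vector) with pairwise distinct exponent vectors. *)
Definition monom (xs : seq (K * K)) (e : seq nat) : K * K :=
  foldr cmul cone [seq cexp p.1 p.2 | p <- zip xs e].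
Definition alg_dep (k : K * K -> Prop) (xs : seq (K * K)) : Prop :=
  exists p : seq ((K * K) * seq nat),
    [/\ uniq (map snd p),
        (forall c, c \in p -> k c.1 /\ size c.2 = size xs),
        (exists c, c \in p /\ c.1 <> czero) &
        foldr cadd czero [seq cmul c.1 (monom xs c.2) | c <- p] = czero].
Definition set_alg_indep (k S : K * K -> Prop) : Prop :=
  forall xs, uniq xs -> (forall x, x \in xs -> S x) -> ~ alg_dep k xs.
Definition free_over (k E F : K * K -> Prop) : Prop :=
  forall S, (forall x, S x -> E x) -> set_alg_indep k S -> set_alg_indep F S.

Definition real_closed_subfield (K' : K -> Prop) : Prop :=
  [/\ K' 0 /\ K' 1,
      (forall x y, K' x -> K' y -> K' (x + y)) /\ (forall x, K' x -> K' (- x)),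
      (forall x y, K' x -> K' y -> K' (x * y)) /\ (forall x, K' x -> x != 0 -> K' x^-1),
      (forall x, K' x -> 0 <= x -> exists y, K' y /\ y * y = x) &
      (forall p : {poly K}, (forall i, K' p`_i) -> odd (size p).-1 ->
         exists x, K' x /\ root p x)].

Definition subgroupC (G G' : K * K -> Prop) : Prop :=
  [/\ (forall g, G' g -> G g), G' cone,
      (forall x y, G' x -> G' y -> G' (cmul x y)) &
      (forall x, G' x -> G' (cinv x))].
Definition pure_subgroupC (G G' : K * K -> Prop) : Prop :=
  subgroupC G G' /\
  forall (m : nat) g, (0 < m)%N -> G' g ->
    (exists h, G h /\ cexp h m = g) -> exists h, G' h /\ cexp h m = g.
Definition subgroupK (A A' : K -> Prop) : Prop :=
  [/\ (forall a, A' a -> A a), A' 1,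
      (forall x y, A' x -> A' y -> A' (x * y)) &
      (forall x, A' x -> A' x^-1)].
Definition pure_subgroupK (A A' : K -> Prop) : Prop :=
  subgroupK A A' /\
  forall (m : nat) a, (0 < m)%N -> A' a ->
    (exists h, A h /\ h ^+ m = a) -> exists h, A' h /\ h ^+ m = a.

(* lambda(k) = a  :<->  a is the unique element of A with a <= k < a eps' *)
Definition is_lambda (A : K -> Prop) (eps' k a : K) : Prop :=
  A a /\ a <= k < a * eps'.

End KI.

Definition Delta_eps (eps : R) (d : R) : Prop := exists z : int, d = Rpowz eps z.
Definition GamDelta (Gam : R * R -> Prop) (eps : R) (y : R * R) : Prop :=
  exists g d, Gam g /\ Delta_eps eps d /\ y = Cmul g (d, R0).

Definition params_ok (Gam : R * R -> Prop) (eps : R) : Prop :=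
  [/\ Rlt R1 eps,
      (forall g, Gam g -> Con_circle g) /\ Gam Cone,
      (forall x y, Gam x -> Gam y -> Gam (Cmul x y)),
      (forall x, Gam x -> Gam (Cinv x)) &
      (* of finite rank *)
      exists gens : seq (R * R), (forall g, List.In g gens -> Gam g) /\
        forall g, Gam g -> exists (m : nat) (ks : seq int),
          (0 < m)%N /\ size ks = size gens /\
          Cexp g m = foldr Cmul Cone [seq Cexpz p.1 p.2 | p <- zip gens ks]].

Definition Cnondeg_sol (a : seq ratq) (ys : seq (R * R)) : Prop :=
  let w := [seq Cmul (ratq_R p.1, R0) p.2 | p <- zip a ys] in
  [/\ size a = size ys, foldr Cadd Czero w = Cone &
      forall m : seq bool, size m = size ys -> has id m ->
        foldr Cadd Czero (mask m w) <> Czero].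
Definition nondeg_sol (K : rcfType) (a : seq ratq) (xs : seq (K * K)) : Prop :=
  let w := [seq cmul (cofK (ratq_K K p.1)) p.2 | p <- zip a xs] in
  [/\ size a = size xs, foldr (@cadd K) (czero K) w = cone K &
      forall m : seq bool, size m = size xs -> has id m ->
        foldr (@cadd K) (czero K) (mask m w) <> czero K].

Definition orientR (p q r : R * R) : R :=
  Rminus (Rmult (Rminus q.1 p.1) (Rminus r.2 p.2))
         (Rmult (Rminus q.2 p.2) (Rminus r.1 p.1)).
Definition orientK (K : rcfType) (p q r : K * K) : K :=
  (q.1 - p.1) * (r.2 - p.2) - (q.2 - p.2) * (r.1 - p.1).

Definition modelT (Gam : R * R -> Prop) (eps : R) (K : rcfType)
    (G : K * K -> Prop) (A : K -> Prop) (gp : R * R -> K * K) (dp : R -> K) : Prop :=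
  [/\
      (subgroupK (fun x => 0 < x) A /\
       [/\ A (dp eps), 1 < dp eps & forall a, A a -> 1 < a -> dp eps <= a] /\
      (forall k : K, 0 < k -> exists a, A a /\ a <= k < a * dp eps)),
      (subgroupC (@on_circle K) G /\
       forall z e, on_circle z -> 0 < e ->
         exists g, G g /\ (g.1 - z.1) ^+ 2 + (g.2 - z.2) ^+ 2 < e),
      ((forall g, Gam g -> G (gp g)) /\
       (forall x y, Gam x -> Gam y -> gp (Cmul x y) = cmul (gp x) (gp y)) /\
       (forall d, Delta_eps eps d -> A (dp d)) /\
       (forall x y, Delta_eps eps x -> Delta_eps eps y -> dp (Rmult x y) = dp x * dp y)),
      (
      (forall g1 g2 g3, Gam g1 -> Gam g2 -> Gam g3 ->
         (Rlt R0 (orientR g1 g2 g3) <-> 0 < orientK (gp g1) (gp g2) (gp g3))) /\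
      (forall (a : seq ratq) (xs : seq (K * K)),
         (forall q, q \in a -> q.1 != 0) ->
         (forall x, x \in xs -> GAset G A x) ->
         nondeg_sol a xs ->
         exists gd : seq ((R * R) * R),
           [/\ (forall p, List.In p gd -> Gam p.1 /\ Delta_eps eps p.2),
               Cnondeg_sol a [seq Cmul p.1 (p.2, R0) | p <- gd] &
               xs = [seq cmul (gp p.1) (cofK (dp p.2)) | p <- gd]])) &
      (forall g, (G g /\ exists n, (0 < n)%N /\ cexp g n = cone K) <->
         exists c, [/\ Gam c, (exists n, (0 < n)%N /\ Cexp c n = Cone) & g = gp c])].

Definition card_lt (X Y : Type) : Prop :=
  (exists f : X -> Y, injective f) /\ ~ (exists f : Y -> X, injective f).

(* Main.v *)
Require Import Defs.
From Stdlib Require Import Reals List Classical.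
From HB Require Import structures.
From mathcomp Require Import all_boot all_order all_algebra.
From mathcomp Require Import complex ring zify.
Set Implicit Arguments. Unset Strict Implicit. Unset Printing Implicit Defensive.
Import Order.TTheory GRing.Theory Num.Theory.
Local Open Scope ring_scope.

Section Bridge.
Variable K : rcfType.
Local Notation C := (complex K).
Definition io (x : K * K) : C := Complex x.1 x.2.
Lemma io_mul x y : io (cmul x y) = io x * io y. Proof. by case: x; case: y. Qed.
Lemma io_add x y : io (cadd x y) = io x + io y. Proof. by case: x; case: y. Qed.
Lemma io_opp x : io (copp x) = - io x. Proof. by case: x. Qed.
Lemma io_inv x : io (cinv x) = (io x)^-1. Proof. by case: x. Qed.
Lemma io_one : io (cone K) = 1. Proof. by []. Qed.
Lemma io_zero : io (czero K) = 0. Proof. by []. Qed.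
Lemma io_inj : injective io. Proof. by move=> [a b] [c d] [-> ->]. Qed.
Lemma io_cofK a : io (cofK a) = (a%:C)%C. Proof. by []. Qed.
Lemma io_exp x n : io (cexp x n) = io x ^+ n.
Proof. elim: n => [|n IH] //=. by rewrite io_mul IH exprS. Qed.
End Bridge.

Section CLs.
Variable C : fieldType.

Lemma sum_mask_split (X : Type) (F : X -> C) (P : pred X) (s : seq X) (m : bitseq) :
  size m = size s ->
  \sum_(x <- s | P x) F x =
  \sum_(x <- mask m s | P x) F x + \sum_(x <- mask (map negb m) s | P x) F x.
Proof.
elim: s m => [|x s IH] [|b m] //=; first by rewrite !big_nil addr0.
move=> [Hs]; case: b; rewrite /= !big_cons (IH m Hs); case: (P x) => //.
  by rewrite addrA.
by rewrite addrCA.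
Qed.

Lemma CL (X : eqType) (f : X -> C) (lab : X -> nat) (n0 : nat) :
  forall T : seq X,
  \sum_(t <- T) f t = 0 -> \sum_(t <- T | lab t == n0) f t != 0 ->
  exists t0, exists R, [/\ t0 \in T, {subset R <= T}, lab t0 = n0,
     has (fun t => lab t != n0) R & f t0 + \sum_(t <- R) f t = 0 /\
     forall m, size m = size R -> has id m -> \sum_(t <- mask m R) f t != 0].
Proof.
move=> T; have [N] := ubnP (size T); elim: N T => // N IH T HsT Hsum Hn0.
case: (classic (exists m, [/\ size m = size T, has id m, has negb m &
                             \sum_(t <- mask m T) f t = 0])).
- move=> [m [Hsm Hid Hneg Hz]].
  have Hsplit := sum_mask_split f predT Hsm.
  have Hsplit0 := sum_mask_split f (fun t => lab t == n0) Hsm.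
  have Hz' : \sum_(t <- mask (map negb m) T) f t = 0.
    by move: Hsum; rewrite Hsplit Hz add0r.
  have Hc := count_predC id m.
  have Hc1 : (0 < count (predC id) m)%N by rewrite -has_count.
  have Hc2 : (0 < count id m)%N by rewrite -has_count.
  have Hsz1 : (size (mask m T) < N)%N.
    by rewrite size_mask //; move: HsT; rewrite -Hsm; lia.
  have Hsz2 : (size (mask (map negb m) T) < N)%N.
    rewrite size_mask ?size_map // count_map; move: HsT; rewrite -Hsm.
    have -> : count (preim negb id) m = count (predC id) m by [].
    lia.
  have sub1 : forall m', {subset mask m' T <= T} by move=> m' x; apply: mem_mask.
  case: (eqVneq (\sum_(t <- mask m T | lab t == n0) f t) 0) => H0.
  + have Hn0' : \sum_(t <- mask (map negb m) T | lab t == n0) f t != 0.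
      by move: Hn0; rewrite Hsplit0 H0 add0r.
    have [t0 [R [Ht0 HR Hl Hh [Hs Hm]]]] := IH _ Hsz2 Hz' Hn0'.
    exists t0, R; split => //; first exact: (sub1 _ _ Ht0).
    by move=> x /HR /sub1.
  + have [t0 [R [Ht0 HR Hl Hh [Hs Hm]]]] := IH _ Hsz1 Hz H0.
    exists t0, R; split => //; first exact: (sub1 _ _ Ht0).
    by move=> x /HR /sub1.
- move=> Hnd.
  have : has (fun t => lab t == n0) T.
    by apply/negPn/negP => Hh; move: Hn0; rewrite big_hasC // eqxx.
  case/hasP => t0 Ht0 /eqP Hl0.
  move: HsT Hsum Hn0 Hnd; case/splitPr: Ht0 => T1 T2 HsT Hsum Hn0 Hnd.
  exists t0, (T1 ++ T2); split => //.
  + by rewrite mem_cat mem_head orbT.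
  + by move=> x; rewrite !mem_cat in_cons => /orP [->|->] //; rewrite !orbT.
  + apply/negPn/negP => Hh; move: Hn0.
    have Hall : forall x, x \in T1 ++ t0 :: T2 -> lab x == n0.
      move=> x; rewrite mem_cat in_cons => /or3P [Hx| /eqP -> | Hx].
      * by apply: negbNE; move/hasPn: Hh; apply; rewrite mem_cat Hx.
      * by rewrite Hl0.
      * by apply: negbNE; move/hasPn: Hh; apply; rewrite mem_cat Hx orbT.
    rewrite big_seq_cond (eq_bigl (fun x => x \in T1 ++ t0 :: T2)); last first.
      by move=> x /=; case Hx: (x \in _) => //=; rewrite Hall.
    by rewrite -big_seq Hsum eqxx.
  + split; first by move: Hsum; rewrite !big_cat big_cons /= addrCA.
    move=> m Hsm Hid; apply/eqP => Hz; apply: Hnd.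
      set k := size T1.
    exists (take k m ++ false :: drop k m); split.
    * rewrite !size_cat /= size_take size_drop Hsm size_cat.
      case: ifP => /= H; lia.
    * by rewrite has_cat /= -has_cat cat_take_drop.
    * by rewrite has_cat /= orbT.
    * rewrite mask_cat /=; last by rewrite size_takel // Hsm size_cat leq_addr.
      move: Hz; rewrite -{1}(cat_take_drop k m) mask_cat //.
      by rewrite size_takel // Hsm size_cat leq_addr.
Qed.
End CLs.

Section ZS.
Variable K : rcfType.
Local Notation C := (complex K).
Definition grpC (P : C -> Prop) : Prop :=
  [/\ P 1, (forall x y, P x -> P y -> P (x * y)),
      (forall x, P x -> P x^-1) & (forall x, P x -> x != 0)].

Variable H : C -> Prop.
Hypothesis HH : grpC H.

Definition Zspan (z : C) : Prop :=
  exists l : seq (int * C), (forall p, p \in l -> H p.2) /\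
    z = \sum_(p <- l) p.1%:~R * p.2.

Lemma zspan0 : Zspan 0.
Proof. by exists [::]; split => //; rewrite big_nil. Qed.

Lemma zspanH h : H h -> Zspan h.
Proof.
move=> Hh; exists [:: (1%Z, h)]; split; first by move=> p; rewrite inE => /eqP ->.
by rewrite big_cons big_nil addr0 mul1r.
Qed.

Lemma zspanD x y : Zspan x -> Zspan y -> Zspan (x + y).
Proof.
move=> [l1 [H1 ->]] [l2 [H2 ->]]; exists (l1 ++ l2); split; last by rewrite big_cat.
by move=> p; rewrite mem_cat => /orP [/H1|/H2].
Qed.

Lemma zspanZ (r : int) x : Zspan x -> Zspan (r%:~R * x).
Proof.
move=> [l [Hl ->]]; exists [seq (r * p.1, p.2)%R | p <- l]; split.
  by move=> p /mapP [q /Hl Hq ->].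
rewrite big_map mulr_sumr; apply: eq_bigr => p _ /=.
by rewrite intrM mulrA.
Qed.

Lemma zspanMH x h : Zspan x -> H h -> Zspan (x * h).
Proof.
move=> [l [Hl ->]] Hh; exists [seq (p.1, p.2 * h) | p <- l]; split.
  move=> p /mapP [q Hq ->] /=; case: HH => _ HM _ _; exact: HM (Hl _ Hq) Hh.
by rewrite big_map mulr_suml; apply: eq_bigr => p _ /=; rewrite mulrA.
Qed.

Lemma zspanM x y : Zspan x -> Zspan y -> Zspan (x * y).
Proof.
move=> Hx [l [Hl ->]]; elim: l Hl => [|p l IH] Hl.
  by rewrite big_nil mulr0; exact: zspan0.
rewrite big_cons mulrDr; apply: zspanD; last first.
  by apply: IH => q Hq; apply: Hl; rewrite in_cons Hq orbT.
have -> : x * (p.1%:~R * p.2) = p.1%:~R * (x * p.2) by ring.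
by apply: zspanZ; apply: zspanMH => //; apply: Hl; rewrite mem_head.
Qed.

Lemma zspan1 : Zspan 1.
Proof. by apply: zspanH; case: HH. Qed.

Lemma zspanN x : Zspan x -> Zspan (- x).
Proof. move=> Hx; have := zspanZ (-1)%Z Hx; by rewrite mulrN1z mulN1r. Qed.

Definition FracS (z : C) : Prop :=
  exists u v, [/\ Zspan u, Zspan v, v != 0 & z = u / v].

Lemma fracZ u : Zspan u -> FracS u.
Proof. by move=> Hu; exists u, 1; split => //; [exact: zspan1| exact: oner_neq0| rewrite divr1]. Qed.

Lemma fracD x y : FracS x -> FracS y -> FracS (x + y).
Proof.
move=> [u1 [v1 [Hu1 Hv1 Hn1 ->]]] [u2 [v2 [Hu2 Hv2 Hn2 ->]]].
exists (u1 * v2 + u2 * v1), (v1 * v2); split.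
- by apply: zspanD; apply: zspanM.
- by apply: zspanM.
- by rewrite mulf_neq0.
- by field; rewrite Hn1 Hn2.
Qed.

Lemma fracN x : FracS x -> FracS (- x).
Proof.
move=> [u [v [Hu Hv Hn ->]]]; exists (- u), v; split => //; first exact: zspanN.
by rewrite mulNr.
Qed.

Lemma fracM x y : FracS x -> FracS y -> FracS (x * y).
Proof.
move=> [u1 [v1 [Hu1 Hv1 Hn1 ->]]] [u2 [v2 [Hu2 Hv2 Hn2 ->]]].
exists (u1 * u2), (v1 * v2); split; try by apply: zspanM.
- by rewrite mulf_neq0.
- by field; rewrite Hn1 Hn2.
Qed.

Lemma fracV x : FracS x -> x != 0 -> FracS x^-1.
Proof.
move=> [u [v [Hu Hv Hn ->]]] Hx; exists v, u; split => //.
  by apply: contraNneq Hx => ->; rewrite mul0r.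
by rewrite invf_div.
Qed.


Lemma clear_den (p : seq (C * nat)) : (forall c, c \in p -> FracS c.1) ->
  exists D, [/\ D != 0, Zspan D & forall c, c \in p -> Zspan (D * c.1)].
Proof.
elim: p => [|c p IH] Hp.
  by exists 1; split => //; [exact: oner_neq0 | exact: zspan1].
have [D [HD0 HDz HDp]] : exists D, [/\ D != 0, Zspan D & forall c, c \in p -> Zspan (D * c.1)].
  by apply: IH => c' Hc'; apply: Hp; rewrite in_cons Hc' orbT.
have [u [v [Hu Hv Hv0 Hc]]] := Hp c (mem_head _ _).
exists (D * v); split; first by rewrite mulf_neq0.
  exact: zspanM.
move=> c'; rewrite in_cons => /orP [/eqP ->|Hc'].
  rewrite Hc; have -> : D * v * (u / v) = D * u by field.
  exact: zspanM.
have -> : D * v * c'.1 = (D * c'.1) * v by ring.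
by apply: zspanM => //; exact: HDp.
Qed.

Lemma big_constcond (X : Type) (s : seq X) (b : bool) (F : X -> C) :
  \sum_(q <- s | b) F q = if b then \sum_(q <- s) F q else 0.
Proof. by case: b => //; rewrite big_pred0. Qed.

Lemma expand (D xi : C) (p : seq (C * nat)) :
  (forall c, c \in p -> Zspan (D * c.1)) ->
  exists T : seq ((int * C) * nat),
    (forall t, t \in T -> H t.1.2 /\ t.1.1 != 0) /\
    forall P : pred nat,
      \sum_(t <- T | P t.2) t.1.1%:~R * t.1.2 * xi ^+ t.2 =
      \sum_(c <- p | P c.2) D * c.1 * xi ^+ c.2.
Proof.
elim: p => [|c p IH] Hp.
  by exists [::]; split => // P; rewrite !big_nil.
have [T [HT HTs]] : exists T : seq ((int * C) * nat),
    (forall t, t \in T -> H t.1.2 /\ t.1.1 != 0) /\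
    forall P : pred nat,
      \sum_(t <- T | P t.2) t.1.1%:~R * t.1.2 * xi ^+ t.2 =
      \sum_(c <- p | P c.2) D * c.1 * xi ^+ c.2.
  by apply: IH => c' Hc'; apply: Hp; rewrite in_cons Hc' orbT.
have [l [Hl Hle]] := Hp c (mem_head _ _).
exists ([seq (q, c.2) | q <- [seq q <- l | q.1 != 0]] ++ T); split.
  move=> t; rewrite mem_cat => /orP [/mapP [q] | /HT //].
  by rewrite mem_filter => /andP [Hq0 Hq] -> /=; split => //; apply: Hl.
move=> P; rewrite big_cat HTs big_map big_cons /= big_constcond.
case: (P c.2); last by rewrite add0r.
congr (_ + _); rewrite big_filter Hle mulr_suml big_mkcond /=; apply: eq_bigr => q _.
by case: eqP => [->|]; rewrite ?mul0r.
Qed.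

Lemma uniq_lab (p : seq (C * nat)) (c0 : C * nat) (F : C * nat -> C) :
  uniq (map snd p) -> c0 \in p ->
  \sum_(c <- p | c.2 == c0.2) F c = F c0.
Proof.
elim: p => [|c p IH] //= /andP [Hn Hu]; rewrite in_cons big_cons => /orP [/eqP ->|Hc0].
  rewrite eqxx big1_seq ?addr0 // => c' /andP [/eqP Hc' Hin].
  by move: Hn; rewrite -Hc'; move/negP; case; apply/mapP; exists c'.
have -> : (c.2 == c0.2) = false.
  apply/negP => /eqP Heq; move/negP: Hn; apply; rewrite Heq; apply/mapP; by exists c0.
exact: IH.
Qed.

Variable GA : C -> Prop.
Hypothesis HGA : grpC GA.
Hypothesis HHGA : forall x, H x -> GA x.
Hypothesis MannC : forall R : seq (ratq * C),
  (forall p, p \in R -> p.1.1 != 0 /\ GA p.2) ->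
  \sum_(p <- R) ((ratq_K K p.1)%:C)%C * p.2 = 1 ->
  (forall m, size m = size R -> has id m ->
     \sum_(p <- mask m R) ((ratq_K K p.1)%:C)%C * p.2 != 0) ->
  forall p, p \in R -> H p.2.

Lemma coef_enc (r0 : int) : r0 != 0 -> exists (g : int -> int) (d : nat),
  (forall r, r != 0 -> g r != 0) /\
  forall r, ((ratq_K K (g r, d))%:C)%C = - (r%:~R) / (r0%:~R : C).
Proof.
case: r0 => [[|n]|n] // _.
- exists (fun r => - r)%R, n; split; first by move=> r; rewrite oppr_eq0.
  move=> r; rewrite /ratq_K /= fmorph_div !rmorph_int rmorph_nat intrN.
  by rewrite -pmulrn.
- exists id, n; split => // r.
  rewrite /ratq_K /= fmorph_div !rmorph_int rmorph_nat NegzE intrN -pmulrn.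
  by rewrite invrN mulrN mulNr opprK.
Qed.


Lemma mainL (xi : C) (p : seq (C * nat)) (c0 : C * nat) :
  GA xi -> (forall c, c \in p -> FracS c.1) -> uniq (map snd p) ->
  c0 \in p -> c0.1 != 0 -> \sum_(c <- p) c.1 * xi ^+ c.2 = 0 ->
  exists m, (0 < m)%N /\ H (xi ^+ m).
Proof.
move=> Hxi Hp Hu Hc0 Hc00 Hsum.
have [H1 HM HV HN] := HH.
have [G1 GM GV GN] := HGA.
have xi0 : xi != 0 by apply: GN.
have [D [HD0 HDz HDp]] := clear_den Hp.
have [T [HT HTs]] := expand xi HDp.
pose f := fun t : (int * C) * nat => t.1.1%:~R * t.1.2 * xi ^+ t.2.
have S0 : \sum_(t <- T) f t = 0.
  have := HTs xpredT; rewrite /= => ->.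
  by rewrite (eq_bigr (fun c => D * (c.1 * xi ^+ c.2))) -?mulr_sumr /= ?Hsum ?mulr0 // => c _; rewrite mulrA.
have S1 : \sum_(t <- T | t.2 == c0.2) f t != 0.
  have := HTs (fun n => n == c0.2); rewrite /= => ->.
  rewrite (uniq_lab (fun c => D * c.1 * xi ^+ c.2)) //.
  by rewrite !mulf_neq0 // expf_neq0.
have [t0 [R [Ht0 HR Hl0 Hhas [Hs0 Hm]]]] := @CL _ _ f (fun t => t.2) c0.2 T S0 S1.
have [Hh0 Hr0] := HT _ Ht0.
have ft0 : f t0 != 0 by rewrite /f !mulf_neq0 ?intr_eq0 ?expf_neq0 //; apply: HN.
have [g [d [Hg Hgd]]] := coef_enc Hr0.
pose den := t0.1.2 * xi ^+ t0.2.
have den0 : den != 0 by rewrite mulf_neq0 ?expf_neq0 //; apply: HN.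
pose Rm := [seq ((g t.1.1, d) : ratq, t.1.2 * xi ^+ t.2 / den) | t <- R].
have Hterm : forall t, ((ratq_K K (g t.1.1, d))%:C)%C * (t.1.2 * xi ^+ t.2 / den) = - f t / f t0.
  move=> t; rewrite Hgd /f /den; field.
  by apply/and3P; split; [exact: expf_neq0 | exact: HN | rewrite intr_eq0].
have Gexp : forall x n, GA x -> GA (x ^+ n).
  move=> x n Hx; elim: n => [|n IH]; first by rewrite expr0.
  by rewrite exprS; apply: (GM).
have Gden : GA den by apply: (GM); [apply: (HHGA) | apply: (Gexp)].
have HRm : forall q, q \in Rm -> q.1.1 != 0 /\ GA q.2.
  move=> q /mapP [t Ht ->] /=; have [Hh Hr] := HT _ (HR _ Ht); split; first exact: Hg.
  by apply: (GM); [apply: (GM); [apply: (HHGA) | apply: (Gexp)] | apply: (GV)].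
have Hft0 : f t0 = - \sum_(t <- R) f t by apply/eqP; rewrite -addr_eq0 Hs0.
have Hsum1 : \sum_(q <- Rm) ((ratq_K K q.1)%:C)%C * q.2 = 1.
  rewrite big_map (eq_bigr (fun t => - f t / f t0)); last by move=> t _; exact: Hterm.
  by rewrite -mulr_suml sumrN -Hft0 divff.
have Hmask : forall m, size m = size Rm -> has id m ->
    \sum_(q <- mask m Rm) ((ratq_K K q.1)%:C)%C * q.2 != 0.
  move=> m; rewrite size_map => Hsm Hid; rewrite -map_mask big_map.
  rewrite (eq_bigr (fun t => - f t / f t0)); last by move=> t _; exact: Hterm.
  by rewrite -mulr_suml sumrN mulf_neq0 ?invr_neq0 // oppr_eq0; apply: Hm.
have HallH := MannC HRm Hsum1 Hmask.
case/hasP: Hhas => t1 Ht1R Hn1.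
have Hq : H (t1.1.2 * xi ^+ t1.2 / den).
  by apply: (HallH ((g t1.1.1, d), _)); apply/mapP; exists t1.
have [Hh1 _] := HT _ (HR _ Ht1R).
have h10 : t1.1.2 != 0 by apply: HN.
have h00 : t0.1.2 != 0 by apply: HN.
have Hrat : H (xi ^+ t1.2 / xi ^+ t0.2).
  have -> : xi ^+ t1.2 / xi ^+ t0.2 = (t1.1.2 * xi ^+ t1.2 / den) * t0.1.2 * t1.1.2^-1.
    rewrite /den; field.
    by apply/and3P; split => //; exact: expf_neq0.
  by apply: (HM); [apply: (HM) | apply: (HV)].
move: Hn1; rewrite /= -Hl0 => Hn1.
case: (ltngtP t0.2 t1.2) => Hlt.
- by exists (t1.2 - t0.2)%N; split; [rewrite subn_gt0 | rewrite expfB].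
- exists (t0.2 - t1.2)%N; split; first by rewrite subn_gt0.
  by rewrite expfB // -invf_div; apply: (HV).
- by rewrite Hlt eqxx in Hn1.
Qed.

End ZS.

Section Model.
Variable K : rcfType.
Local Notation C := (complex K).
Definition pic (z : C) : K * K := (complex.Re z, complex.Im z).
Lemma io_pic z : io (pic z) = z. Proof. by case: z. Qed.
Lemma pic_io x : pic (io x) = x. Proof. by case: x. Qed.
Definition GAc (G : K * K -> Prop) (A : K -> Prop) (z : C) := GAset G A (pic z).

Lemma io_foldr (l : seq (K * K)) : io (foldr (@cadd K) (czero K) l) = \sum_(y <- l) io y.
Proof. by elim: l => [|y l IH] /=; rewrite ?big_nil ?big_cons // io_add IH. Qed.

Lemma io_nz_circle (g : K * K) : on_circle g -> io g != 0.
Proof.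
move=> Hg; apply/eqP => E; have Eg : g = czero K by apply: io_inj; rewrite E.
by move: Hg; rewrite /on_circle Eg /= expr0n /= addr0 => /eqP; rewrite eq_sym oner_eq0.
Qed.

Lemma grp_GA (G : K * K -> Prop) (A : K -> Prop) :
  subgroupC (@on_circle K) G -> subgroupK (fun x : K => 0 < x) A -> grpC (GAc G A).
Proof.
case=> Gc G1 GM GV [Ap A1 AM AV]; split.
- exists (cone K), 1; split => //; split => //; apply: io_inj.
  by rewrite io_pic io_mul io_cofK rmorph1 mulr1.
- move=> x y [g1 [a1 [Hg1 [Ha1 Hx]]]] [g2 [a2 [Hg2 [Ha2 Hy]]]].
  exists (cmul g1 g2), (a1 * a2); split; [exact: GM | split; first exact: AM].
  apply: io_inj; rewrite io_pic -[x]io_pic -[y]io_pic Hx Hy !io_mul !io_cofK rmorphM.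
  by ring.
- move=> x [g [a [Hg [Ha Hx]]]]; exists (cinv g), a^-1; split; [exact: GV | split; first exact: AV].
  apply: io_inj; rewrite io_pic -[x]io_pic Hx !io_mul io_inv !io_cofK fmorphV.
  by rewrite invfM.
- move=> x [g [a [Hg [Ha Hx]]]]; rewrite -[x]io_pic Hx io_mul io_cofK mulf_neq0 //.
    by apply: io_nz_circle; apply: Gc.
  by rewrite fmorph_eq0 gt_eqF //; apply: Ap.
Qed.

Lemma frac_gen (G' : K * K -> Prop) (A' : K -> Prop) : grpC (GAc G' A') ->
  forall x, gen_field (GAset G' A') x -> FracS (GAc G' A') (io x).
Proof.
move=> HH x Hx; apply: (Hx (fun y => FracS (GAc G' A') (io y))).
  split.
  - by split; [rewrite io_zero | rewrite io_one]; apply: (fracZ HH); [exact: zspan0 | exact: (zspan1 HH)].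
  - by move=> a b Ha Hb; rewrite io_add; apply: (fracD HH).
  - by move=> a Ha; rewrite io_opp; apply: fracN.
  - by move=> a b Ha Hb; rewrite io_mul; apply: (fracM HH).
  - move=> a Ha Ha0; rewrite io_inv; apply: fracV => //.
    by apply/eqP => E; apply: Ha0; apply: io_inj; rewrite E.
by move=> s Hs; apply: (fracZ HH); apply: zspanH; rewrite /GAc pic_io.
Qed.

Variables (G : K * K -> Prop) (A : K -> Prop) (G' : K * K -> Prop) (A' : K -> Prop).
Hypothesis subG : subgroupC (@on_circle K) G.
Hypothesis subA : subgroupK (fun x : K => 0 < x) A.
Hypothesis subG' : subgroupC G G'.
Hypothesis subA' : subgroupK A A'.
Hypothesis MannP : forall (a : seq ratq) (xs : seq (K * K)),
  (forall q, q \in a -> q.1 != 0) -> (forall x, x \in xs -> GAset G A x) ->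
  nondeg_sol a xs -> forall x, x \in xs -> GAset G' A' x.

Lemma subG'c : subgroupC (@on_circle K) G'.
Proof. by case: subG' => HG HG1 HGM HGV; case: subG => Hc _ _ _; split => // g /HG /Hc. Qed.
Lemma subA'c : subgroupK (fun x : K => 0 < x) A'.
Proof. by case: subA' => HA HA1 HAM HAV; case: subA => Hc _ _ _; split => // g /HA /Hc. Qed.

Lemma MannC_of : forall R : seq (ratq * C),
  (forall p, p \in R -> p.1.1 != 0 /\ GAc G A p.2) ->
  \sum_(p <- R) ((ratq_K K p.1)%:C)%C * p.2 = 1 ->
  (forall m, size m = size R -> has id m ->
     \sum_(p <- mask m R) ((ratq_K K p.1)%:C)%C * p.2 != 0) ->
  forall p, p \in R -> GAc G' A' p.2.
Proof.
move=> R HR Hs Hm p Hp.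
have Hz : [seq cmul (cofK (ratq_K K q.1)) q.2 | q <- zip (map fst R) (map (pic \o snd) R)] =
          map (fun q => cmul (cofK (ratq_K K q.1)) (pic q.2)) R.
  by elim: R {HR Hs Hm Hp} => //= q R ->.
apply: (MannP (a := map fst R) (xs := map (pic \o snd) R)).
- by move=> q /mapP [p' Hp' ->]; exact: (HR p' Hp').1.
- by move=> x /mapP [p' Hp' ->]; exact: (HR p' Hp').2.
- rewrite /nondeg_sol /=; split; first by rewrite !size_map.
    rewrite Hz; apply: io_inj; rewrite io_foldr big_map io_one -Hs.
    by apply: eq_bigr => p' _; rewrite io_mul io_pic io_cofK.
  move=> m; rewrite size_map => Hsm Hid; rewrite Hz -map_mask => E.
  move/eqP: (Hm m Hsm Hid); apply; apply: (etrans _ (io_zero K)); rewrite -E io_foldr big_map.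
  by apply: eq_bigr => p' _; rewrite io_mul io_pic io_cofK.
- by apply/mapP; exists p.
Qed.

Lemma keyL x : GAset G A x -> alg_dep (gen_field (GAset G' A')) [:: x] ->
  exists m, (0 < m)%N /\ GAset G' A' (cexp x m).
Proof.
move=> Hx [pp [Hu Hc [c [Hcin Hc0]] Hsum]].
have Hsz : forall c, c \in pp -> c.2 = [:: head 0%N c.2].
  by move=> c' /Hc [_]; case: c'.2 => [|n [|]].
have HH := grp_GA subG'c subA'c.
have HGA := grp_GA subG subA.
have HHGA : forall z, GAc G' A' z -> GAc G A z.
  move=> z [g [a [Hg [Ha Hz]]]]; exists g, a; split; first by case: subG' => + _ _ _; apply.
  by split => //; case: subA' => + _ _ _; apply.
have := @mainL K (GAc G' A') HH (GAc G A) HGA HHGA MannC_of (io x)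
   [seq (io c.1, head 0%N c.2) | c <- pp] (io c.1, head 0%N c.2).
case.
- by rewrite /GAc pic_io.
- by move=> c' /mapP [c'' Hin ->]; apply: frac_gen => //; exact: (Hc c'' Hin).1.
- rewrite -map_comp.
  rewrite -(map_inj_uniq (f := fun n : nat => [:: n])); last by move=> a b [].
  have -> : [seq [:: n] | n <- [seq (snd \o (fun c0 : K * K * seq nat => (io c0.1, head 0%N c0.2))) i | i <- pp]] = map snd pp.
    rewrite -map_comp; apply/eq_in_map => c' Hc'.
    by rewrite /= -(Hsz c' Hc').
  exact: Hu.
- by apply: (map_f (fun c => (io c.1, head 0%N c.2))).
- by apply/eqP => /= E; apply: Hc0; apply: io_inj; rewrite E.
- apply: (etrans _ (io_zero K)); rewrite -Hsum io_foldr !big_map.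
  apply: eq_big_seq => c' Hc'.
  by rewrite io_mul [c'.2 in RHS](Hsz c' Hc') /monom /= io_mul io_exp mulr1.
- by move=> m [Hm HHm]; exists m; split => //; move: HHm; rewrite -io_exp /GAc pic_io.
Qed.
End Model.

Section Fin.
Variable K : rcfType.

Lemma no_dep_nil (k : K * K -> Prop) : ~ alg_dep k [::].
Proof.
move=> [p [Hu Hc [c [Hcin Hc0]] Hs]].
have Hnil : forall c', c' \in p -> c'.2 = [::].
  by move=> c' /Hc [_]; case: c'.2.
case: p Hu Hc Hcin Hs Hnil => [|c1 [|c2 p]] //= Hu Hc Hcin Hs Hnil.
- rewrite inE in Hcin; move/eqP: Hcin => Ec; subst c1.
  apply: Hc0; apply: io_inj; move: (congr1 (@io K) Hs).
  by rewrite io_add io_mul (Hnil c (mem_head _ _)) /monom /= !io_zero io_one addr0 mulr1.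
- move: Hu; rewrite (Hnil c1 (mem_head _ _)) (Hnil c2); last by rewrite !inE eqxx orbT.
  by rewrite inE eqxx.
Qed.

Lemma dep_self (S : K * K -> Prop) x : S x -> alg_dep (gen_field S) [:: x].
Proof.
move=> Sx; exists [:: (cone K, [:: 1%N]); (copp x, [:: 0%N])]; split => //.
- move=> c; rewrite !inE => /orP [/eqP -> | /eqP ->]; split => //.
    by move=> P [[_ P1] _ _ _ _] _.
  by move=> P [_ _ PN _ _] PS; apply: PN; apply: PS.
- exists (cone K, [:: 1%N]); split; first by rewrite mem_head.
  by case => /eqP; rewrite oner_eq0.
  apply: io_inj; rewrite io_foldr !big_map !big_cons big_nil /monom /=.
  rewrite (io_mul (cone K)) !io_mul io_opp io_one io_zero; ring.
Qed.

Lemma dep_of_free (k E F : K * K -> Prop) x :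
  free_over k E F -> E x -> alg_dep F [:: x] -> alg_dep k [:: x].
Proof.
move=> Hf Ex HF; apply: NNPP => Hn.
have Hind : set_alg_indep k (fun y => y = x).
  move=> xs Hu Hxs; case: xs Hu Hxs => [|y [|z xs]] Hu Hxs.
  - exact: no_dep_nil.
  - by rewrite (Hxs y (mem_head _ _)).
  - move: Hu; rewrite /= (Hxs y (mem_head _ _)) (Hxs z); last by rewrite !inE eqxx orbT.
    by rewrite inE eqxx.
have Hsub : forall y, (fun y => y = x) y -> E y by move=> y /= ->.
have := Hf _ Hsub Hind.
move=> /(_ [:: x] is_true_true) H; by apply: (H _ HF) => y; rewrite inE => /eqP.

Qed.

Lemma cexp_grp (G : K * K -> Prop) g n :
  G (cone K) -> (forall x y, G x -> G y -> G (cmul x y)) -> G g -> G (cexp g n).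
Proof. by move=> G1 GM Gg; elim: n => [|n IH] //=; apply: GM. Qed.

Lemma circle_scale (g : K * K) (a : K) : on_circle (cmul g (cofK a)) -> on_circle g ->
  0 < a -> a = 1.
Proof.
rewrite /on_circle /= => H1 H2 Ha.
have : a ^+ 2 = 1.
  rewrite -H1 -[X in X = _]mulr1 -H2; ring.
move/eqP; rewrite sqrf_eq1 => /orP [/eqP // | /eqP Ea].
by move: Ha; rewrite Ea ltr0N1.
Qed.
End Fin.

Theorem mainTheorem12
  (Gam : R * R -> Prop) (eps : R) (Hpar : params_ok Gam eps)
  (K : rcfType) (G : K * K -> Prop) (A : K -> Prop)
  (gp : R * R -> K * K) (dp : R -> K)
  (HT : modelT Gam eps G A gp dp)
  (kappa : Type) (Hkinf : exists f : nat -> kappa, injective f)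
  (Hkgt : card_lt {y : R * R | GamDelta Gam eps y} kappa)
  (K' : K -> Prop) (G' : K * K -> Prop) (A' : K -> Prop)
  (HK' : real_closed_subfield K')
  (HK'card : card_lt {x : K | K' x} kappa)
  (HG' : pure_subgroupC G G')
  (HGamG' : forall g, Gam g -> G' (gp g))
  (HG'K' : forall g, G' g -> Ci K' g)
  (HA' : pure_subgroupK A A')
  (HDelA' : forall d, Delta_eps eps d -> A' (dp d))
  (HA'K' : forall a, A' a -> K' a)
  (Hfree : free_over (gen_field (GAset G' A')) (Ci K') (gen_field (GAset G A))) :
  (forall g, (G g /\ Ci K' g) <-> G' g) /\
  (forall a, (A a /\ K' a) <-> A' a) /\
  ((forall k, K' k -> 0 < k -> exists a, A' a /\ a <= k < a * dp eps) <->
   (forall k, K' k -> 0 < k -> forall a, is_lambda A (dp eps) k a -> K' a)).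
Proof.
move: HT => [[subA [[Aeps Heps1 Heps_min] Hlam]] [subG _] _ [_ HMann] Htors].
move: HG' HA' => [subG' pureG'] [subA' pureA'].
have MannP : forall (a : seq ratq) (xs : seq (K * K)),
  (forall q, q \in a -> q.1 != 0) -> (forall x, x \in xs -> GAset G A x) ->
  nondeg_sol a xs -> forall x, x \in xs -> GAset G' A' x.
  move=> a xs Ha Hxs Hnd x Hx.
  have [gd [Hgd _ Exs]] := HMann a xs Ha Hxs Hnd.
  move: Hx; rewrite Exs; clear Exs; elim: gd Hgd => // [[ga de] gd IH] Hgd.
  rewrite /= in_cons => /orP [/eqP -> | Hx].
  - have [Hga Hde] := Hgd (ga, de) (List.in_eq _ _).
    by exists (gp ga), (dp de); split; [apply: HGamG' | split; [apply: HDelA' |]].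
  - by apply: IH Hx => p Hp; apply: Hgd; apply: List.in_cons.
have Hkey := @keyL K G A G' A' subG subA subG' subA' MannP.
have Hdep : forall x, GAset G A x -> Ci K' x -> alg_dep (gen_field (GAset G' A')) [:: x].
  by move=> x Hx Cx; apply: (dep_of_free Hfree Cx); apply: dep_self.
case: subG => Gc G1 GM GV.
case: subA => Ap A1 AM AV.
case: subG' => G'G G'1 G'M G'V.
case: subA' => A'A A'1 A'M A'V.
have part2 : forall a, (A a /\ K' a) <-> A' a.
  move=> a; split; last by move=> Ha; split; [apply: A'A | apply: HA'K'].
  move=> [Aa Ka].
  have GAx : GAset G A (cofK a).
    exists (cone K), a; split => //; split => //.
    by apply: io_inj; rewrite io_mul io_one mul1r.
  have Cx : Ci K' (cofK a) by split => //; case: HK' => [[]].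
  have [m [Hm [g' [a' [Hg' [Ha' Heq]]]]]] := Hkey _ GAx (Hdep _ GAx Cx).
  have Ecx : cexp (cofK a) m = cofK (a ^+ m).
    by apply: io_inj; rewrite io_exp !io_cofK rmorphXn.
  move: Heq; rewrite Ecx /cofK /cmul /= => [[E1 E2]].
  have a'0 : 0 < a' by apply: Ap; apply: A'A.
  have a0 : 0 < a by apply: Ap.
  have g2 : g'.2 = 0.
    by move/eqP: E2; rewrite mulr0 add0r eq_sym mulf_eq0 (gt_eqF a'0) orbF => /eqP.
  have g1 : g'.1 ^+ 2 = 1.
    by have := Gc _ (G'G _ Hg'); rewrite /on_circle g2 expr0n /= addr0.
  have Eam : a ^+ m = a'.
    move/eqP: g1; rewrite sqrf_eq1 => /orP [/eqP e | /eqP e].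
      by rewrite E1 e g2 mul1r mulr0 subr0.
    have : 0 < a ^+ m by rewrite exprn_gt0.
    by rewrite E1 e g2 mulr0 subr0 mulN1r oppr_gt0 ltNge (ltW a'0).
  have [h [Ah Eh]] := pureA' m a' Hm Ha' (ex_intro _ a (conj Aa Eam)).
  have h0 : 0 < h by apply: Ap; apply: A'A.
  have -> : a = h.
    apply: (pexpIrn Hm); rewrite ?nnegrE ?ltW //.
    by rewrite Eh Eam.
  exact: Ah.
split.
  move=> g; split; last by move=> Hg; split; [apply: G'G | apply: HG'K'].
  move=> [Gg Cg].
  have GAg : GAset G A g.
    exists g, 1; split => //; split => //.
    by apply: io_inj; rewrite io_mul io_cofK rmorph1 mulr1.
  have [m [Hm [g' [a' [Hg' [Ha' Heq]]]]]] := Hkey _ GAg (Hdep _ GAg Cg).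
  have Gm : G (cexp g m) by apply: cexp_grp.
  have a'1 : a' = 1.
    apply: (circle_scale (g := g')); last by apply: Ap; apply: A'A.
      by rewrite -Heq; apply: Gc.
    by apply: Gc; apply: G'G.
  have Eg' : cexp g m = g'.
    by rewrite Heq a'1; apply: io_inj; rewrite io_mul io_cofK rmorph1 mulr1.
  have [h [Hh Eh]] := pureG' m (cexp g m) Hm (ltac:(by rewrite Eg')) (ex_intro _ g (conj Gg erefl)).
  have g0 : io g != 0 by apply: io_nz_circle; apply: Gc.
  have hn0 : io h != 0 by apply: io_nz_circle; apply: Gc; apply: G'G.
  pose u := cmul g (cinv h).
  have Gu : G u by apply: GM => //; apply: GV; apply: G'G.
  have Tu : cexp u m = cone K.
    apply: io_inj; rewrite io_exp io_mul io_inv io_one exprMn exprVn -!io_exp Eh divff //.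
    by rewrite io_exp expf_neq0.
  have [c [Hc _ Euc]] := (Htors u).1 (conj Gu (ex_intro _ m (conj Hm Tu))).
  have G'u : G' u by rewrite Euc; apply: HGamG'.
  have -> : g = cmul u h.
    by apply: io_inj; rewrite !io_mul io_inv -mulrA mulVf // mulr1.
  by apply: G'M.
split => //.
split.
- move=> Ha k Kk k0 a [Aa Hak].
  have [a' [Ha' Hak']] := Ha k Kk k0.
  suff -> : a = a' by apply: HA'K'.
  have Aa' : A a' by apply: A'A.
  have a0 : 0 < a by apply: Ap.
  have a'0 : 0 < a' by apply: Ap.
  case/andP: Hak => Hak1 Hak2; case/andP: Hak' => Hak1' Hak2'.
  case: (ltgtP a a') => // Hlt.
  + have : dp eps <= a' / a.
      apply: Heps_min; first by apply: AM => //; apply: AV.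
      by rewrite ltr_pdivlMr // mul1r.
    rewrite ler_pdivlMr // => Hle.
    have := lt_le_trans Hak2 (le_trans _ Hle); rewrite mulrC lexx => /(_ isT).
    by move=> Hlt2; move: (lt_le_trans Hlt2 Hak1'); rewrite ltxx.
  + have : dp eps <= a / a'.
      apply: Heps_min; first by apply: AM => //; apply: AV.
      by rewrite ltr_pdivlMr // mul1r.
    rewrite ler_pdivlMr // => Hle.
    have := lt_le_trans Hak2' (le_trans _ Hle); rewrite mulrC lexx => /(_ isT).
    by move=> Hlt2; move: (lt_le_trans Hlt2 Hak1); rewrite ltxx.
- move=> Hb k Kk k0.
  have [a [Aa Hak]] := Hlam k k0.
  have Ka : K' a by apply: (Hb k Kk k0); split.
  by exists a; split => //; apply/part2.
Qed.
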